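(* Let $G$ be a nontrivial finite abelian $p$-group ($p$ any prime). Then $G$ has a unique minimal nontrivial characteristic subgroup (i.e. the set of nontrivial characteristic subgroups of $G$ has a least element under inclusion). *)

(* Defs.v *)
From mathcomp Require Import all_boot fingroup morphism automorphism pgroup.

(* Main.v *)
Require Import Defs.
From mathcomp Require Import all_boot fingroup morphism automorphism pgroup.
From mathcomp Require Import all_fingroup all_solvable.
Set Implicit Arguments.
Unset Strict Implicit.
Unset Printing Implicit Defensive.
Local Open Scope group_scope.

Lemma ordP (gT : finGroupType) (G C : {group gT}) (x g : gT) :
  abelian G -> <[x]> \x C = G -> g \in C -> #[g] %| #[x] ->
  #[x * g] = #[x] /\ <[x * g]> :&: C = 1.
Proof.
move=> cGG defG Cg dvd.
have [_ defM _ ti] := dprodP defG.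
have sCG : C \subset G by rewrite -defM mulG_subr.
have Gx : x \in G by rewrite -defM (subsetP (mulG_subl _ _)) ?cycle_id.
have cxg : commute x g by apply: (centsP cGG) => //; apply: (subsetP sCG).
have key : forall m, (x * g) ^+ m \in C -> x ^+ m = 1 /\ (x * g) ^+ m = 1.
  move=> m; rewrite expgMn // => Cm.
  have Cxm : x ^+ m \in C.
    have -> : x ^+ m = x ^+ m * g ^+ m * (g ^+ m)^-1 by rewrite mulgK.
    by rewrite groupM ?groupV ?groupX.
  have xm1 : x ^+ m = 1.
    have : x ^+ m \in <[x]> :&: C by rewrite inE mem_cycle Cxm.
    by rewrite ti => /set1P.
  split=> //.
  have : #[x] %| m by rewrite order_dvdn xm1.
  by move/(dvdn_trans dvd); rewrite order_dvdn xm1 mul1g => /eqP.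
split.
  apply/eqP; rewrite eqn_dvd; apply/andP; split.
    rewrite order_dvdn expgMn // expg_order mul1g -order_dvdn //.
  have [|xm _] := key #[x * g]; first by rewrite expg_order group1.
  by rewrite order_dvdn xm.
apply/trivgP/subsetP => h /setIP[/cycleP[m ->] Cm].
by have [_ ->] := key m Cm; rewrite inE.
Qed.

Lemma subZ (gT : finGroupType) (K : {group gT}) (p : nat) (y w : gT) :
  prime p -> p.-elt y -> w \in <[y]> -> w != 1 -> w \in K ->
  y ^+ (#[y] %/ p) \in K.
Proof.
move=> pp py wy ntw Kw.
have pw : p.-group <[w]> by apply: pgroupS py; rewrite cycle_subG.
have ntW : <[w]> != 1 by rewrite cycle_eq1.
have [_ pdw _] := pgroup_pdiv pw ntW.
rewrite -orderE in pdw.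
have dvdy : p %| #[y] by apply: dvdn_trans pdw _; apply: cardSg; rewrite cycle_subG.
set w' := w ^+ (#[w] %/ p).
have ow' : #|<[w']>| = p.
  have qp : #[w] = ((#[w] %/ p) * p)%N by rewrite divnK.
  have q0 : 0 < #[w] %/ p by rewrite divn_gt0 ?prime_gt0 // dvdn_leq.
  rewrite -orderE orderXdiv; last by rewrite {2}qp dvdn_mulr.
  by rewrite {1}qp mulKn.
have : <[w']>%G \in [set H : {group gT} | H \subset <[y]> & #|H| == p].
  rewrite inE ow' eqxx andbT cycle_subG groupX //.
rewrite cycle_sub_group // => /set1P /(congr1 val) /= eq.
have : y ^+ (#[y] %/ p) \in <[w']> by rewrite eq cycle_id.
by move/(subsetP (cycleX w _)); apply: (subsetP _); rewrite cycle_subG.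
Qed.
Lemma autL (gT : finGroupType) (G C : {group gT}) (x u : gT) :
  abelian G -> <[x]> \x C = G -> u \in G -> #[u] = #[x] -> <[u]> :&: C = 1 ->
  exists f : {morphism G >-> gT},
    [/\ 'injm f, f @* G = G, f x = u & {in C, forall w, f w = w}].
Proof.
move=> cGG defG Gu ou tiuC.
have dvd : #[u] %| #[x] by rewrite ou.
have sCG : C \subset G by case/dprodP: defG => _ <- _ _; exact: mulG_subr.
have sxG : <[x]> \subset G by case/dprodP: defG => _ <- _ _; exact: mulG_subl.
have cfHK : idm C @* C \subset 'C(eltm dvd @* <[x]>).
  rewrite morphim_idm // im_eltm.
  apply: subset_trans sCG _; apply: subset_trans cGG _.
  by apply: centS; rewrite cycle_subG.
exists (dprodm defG cfHK).
have inj : 'injm (dprodm defG cfHK).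
  rewrite injm_dprodm injm_eltm ou dvdnn /= ker_idm sub1G /=.
  by rewrite im_eltm morphim_idm // tiuC.
split=> //.
- apply/eqP; rewrite eqEcard {1}im_dprodm im_eltm morphim_idm //.
  rewrite mulG_subG cycle_subG Gu sCG /=.
  by move: inj; rewrite -card_im_injm => /eqP ->.
- by rewrite /= dprodmEl ?cycle_id // /= eltm_id.
- by move=> w Cw; rewrite /= dprodmEr.
Qed.
Lemma splitN (gT : finGroupType) (n : nat) (B : {group gT}) (b : gT) :
  #|B| <= n -> abelian B -> b \in B -> b != 1 ->
  exists c : gT, exists C : {group gT}, <[c]> \x C = B /\ b \notin C.
Proof.
elim: n B => [|n IH] B leB cBB Bb ntb.
  by rewrite leqNgt cardG_gt0 in leB.
have [c0 Bc0 oc0] := exponent_witness (abelian_nil cBB).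
have /splitsP[C0 /complP[ti0 def0]] := abelian_splits Bc0 (esym oc0) cBB.
have sC0B : C0 \subset B by rewrite -def0 mulG_subr.
have cC0 : C0 \subset 'C(<[c0]>).
  apply: subset_trans sC0B _; apply: subset_trans cBB _.
  by apply: centS; rewrite cycle_subG.
have dB : <[c0]> \x C0 = B by rewrite dprodE.
case bC0 : (b \in C0); last first.
  by exists c0, C0; rewrite bC0.
have ntc0 : c0 != 1.
  apply: contraNneq ntb => c01.
  have : #[b] %| exponent B := dvdn_exponent Bb.
  by rewrite oc0 c01 order1 dvdn1 order_eq1.
have ltC0 : #|C0| <= n.
  rewrite -ltnS; apply: leq_trans leB.
  rewrite -(dprod_card dB) -{1}[#|C0|]mul1n ltn_mul2r cardG_gt0 /=.
  by rewrite -orderE ltn_neqAle order_gt0 andbT eq_sym order_eq1.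
have [c [C1 [d1 nb]]] := IH C0 ltC0 (abelianS sC0B cBB) bC0 ntb.
have [_ def1 cC1 ti1] := dprodP d1.
have sC1 : C1 \subset C0 by rewrite -def1 mulG_subr.
have scC0 : <[c]> \subset C0 by rewrite -def1 mulG_subl.
have cC1c0 : C1 \subset 'C(<[c0]>) := subset_trans sC1 cC0.
have ti2 : <[c0]> :&: C1 = 1.
  by apply/trivgP; rewrite -ti0 setIS.
exists c, (<[c0]> <*> C1)%G; split.
  rewrite /= -dprodEY // dprodA [<[c]> \x <[c0]>]dprodC -dprodA d1.
  exact: dB.
rewrite /= cent_joinEr //.
apply/negP => /mulsgP[a g ca C1g def_b].
have aC0 : a \in C0.
  have -> : a = b * g^-1 by rewrite def_b mulgK.
  by rewrite groupM ?groupV // (subsetP sC1).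
have a1 : a = 1.
  have : a \in <[c0]> :&: C0 by rewrite inE ca aC0.
  by rewrite ti0 => /set1P.
by move: nb; rewrite def_b a1 mul1g C1g.
Qed.

Lemma keyK (gT : finGroupType) (G K : {group gT}) (p : nat) (y : gT) :
  prime p -> p.-group G -> abelian G -> K \char G -> K :!=: 1 ->
  y \in G -> #[y] = exponent G -> y ^+ (#[y] %/ p) \in K.
Proof.
move=> pp pG cGG chK ntK Gy oy.
have [B0 /complP[ti0 def0]] := splitsP (abelian_splits Gy oy cGG).
have sB0 : B0 \subset G by rewrite -def0 mulG_subr.
have cB0 : B0 \subset 'C(<[y]>).
  apply: subset_trans sB0 _; apply: subset_trans cGG _.
  by apply: centS; rewrite cycle_subG.
have dG : <[y]> \x B0 = G by rewrite dprodE.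
have [k Kk ntk] := trivgPn _ ntK.
have Gk : k \in G by apply: (subsetP (char_sub chK)).
have [a [b [ya Bb dk _]]] := mem_dprod dG Gk.
have py : p.-elt y := mem_p_elt pG Gy.
have syG : <[y]> \subset G by rewrite cycle_subG.
have Ga : a \in G := subsetP syG a ya.
case: (eqVneq b 1) => [b1 | ntb].
  rewrite dk b1 mulg1 in ntk Kk.
  exact: (subZ pp py ya ntk Kk).
have [c [C1 [dB0 nbC1]]] := splitN (leqnn _) (abelianS sB0 cGG) Bb ntb.
have [c' [g [cc' C1g db _]]] := mem_dprod dB0 Bb.
have ntc' : c' != 1.
  by apply: contraNneq nbC1 => c1; rewrite db c1 mul1g.
have /cycleP[m dc'] := cc'.
have [_ defB0 _ _] := dprodP dB0.
have sC1 : C1 \subset B0 by rewrite -defB0 mulG_subr.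
have scB0 : <[c]> \subset B0 by rewrite -defB0 mulG_subl.
have tiy1 : <[y]> :&: C1 = 1 by apply/trivgP; rewrite -ti0 setIS.
have cC1 : C1 \subset 'C(<[y]>) := subset_trans sC1 cB0.
set C := (<[y]> <*> C1)%G.
have dG2 : <[c]> \x C = G.
  rewrite /= -dprodEY // dprodA [<[c]> \x <[y]>]dprodC -dprodA dB0.
  exact: dG.
have Gc : c \in G by apply: (subsetP sB0); apply: (subsetP scB0); apply: cycle_id.
set s := #[y] %/ #[c].
have dcy : #[c] %| #[y] by rewrite oy dvdn_exponent.
have sy : #[y] = (s * #[c])%N by rewrite divnK.
have s0 : 0 < s by move: (order_gt0 y); rewrite sy muln_gt0 => /andP[].
have yC : y \in C by apply: (subsetP (joing_subl _ _)); apply: cycle_id.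
have Cys : y ^+ s \in C by rewrite groupX.
have dvd2 : #[y ^+ s] %| #[c] by rewrite order_dvdn -expgM -sy expg_order.
have [ou tiu] := ordP cGG dG2 Cys dvd2.
have Gys : y ^+ s \in G by rewrite groupX.
have Gu : c * y ^+ s \in G by rewrite groupM.
have [f [injf imf fc fC]] := autL cGG dG2 Gu ou tiu.
have fK : f @* K = K by case/charP: chK => _ /(_ f injf imf).
have fk : f k \in K by rewrite -fK mem_morphim.
have sCG : C \subset G by case/dprodP: dG2 => _ <- _ _; exact: mulG_subr.
have Cag : a * g \in C.
  rewrite groupM //; last by apply: (subsetP (joing_subr _ _)).
  by apply: (subsetP (joing_subl _ _)).
have Gag : a * g \in G by apply: (subsetP sCG).
have Gcm : c ^+ m \in G by rewrite groupX.
have dk2 : k = c ^+ m * (a * g).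
  by rewrite dk db dc' mulgA (centsP cGG a Ga (c ^+ m) Gcm) -mulgA.
have fk2 : f k = k * y ^+ (s * m).
  rewrite dk2 morphM // morphX // fc fC // expgMn; last first.
    exact: (centsP cGG c Gc (y ^+ s) Gys).
  rewrite expgM -!mulgA; congr (_ * _).
  rewrite mulgA; exact: (centsP cGG _ (groupX m Gys) _ Gag).
have Kys : y ^+ (s * m) \in K.
  have -> : y ^+ (s * m) = k^-1 * f k by rewrite fk2 mulKg.
  by rewrite groupM ?groupV.
have ntys : y ^+ (s * m) != 1.
  apply: contra ntc' => /eqP h.
  have : #[y] %| s * m by rewrite order_dvdn h.
  rewrite sy dvdn_pmul2l // => hd.
  by rewrite dc' -order_dvdn.
by apply: (subZ pp py _ ntys Kys); rewrite mem_cycle.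
Qed.

Theorem mainTheorem13 (gT : finGroupType) (G : {group gT}) (p : nat) :
  prime p -> p.-group G -> abelian G -> G :!=: 1 ->
  exists H : {group gT},
    [/\ H \char G, H :!=: 1 &
        forall K : {group gT}, K \char G -> K :!=: 1 -> H \subset K].
Proof.
move=> pp pG cGG ntG.
set E := exponent G.
have pE : p.-nat E by rewrite pnat_exponent.
have E1 : 1 < E.
  have [x Gx ntx] := trivgPn _ ntG.
  have := dvdn_leq (exponent_gt0 G) (dvdn_exponent Gx).
  apply: leq_trans; rewrite ltn_neqAle order_gt0 andbT eq_sym order_eq1 //.
have lg : 0 < logn p E.
  rewrite lt0n; apply: contraTneq E1 => l0.
  by rewrite -(part_pnat_id pE) p_part l0.
set n := (logn p E).-1.
have En : E = (p ^ n.+1)%N by rewrite -(part_pnat_id pE) p_part /n prednK.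
have pn : forall y : gT, #[y] = E -> #[y] %/ p = (p ^ n)%N.
  by move=> y ->; rewrite En expnS mulKn // prime_gt0.
have [x0 Gx0 ox0] := exponent_witness (abelian_nil cGG).
exists ('Mho^n(G))%G; split.
- exact: Mho_char.
- rewrite /= (MhoE n pG); apply/trivgPn; exists (x0 ^+ (p ^ n)).
    by apply: mem_gen; apply/imsetP; exists x0.
  by rewrite -order_dvdn -ox0 -/E En dvdn_Pexp2l ?prime_gt1 // ltnn.
move=> K chK ntK.
rewrite /= (MhoE n pG) gen_subG; apply/subsetP => _ /imsetP[x Gx ->].
case x1 : (x ^+ (p ^ n) == 1); first by rewrite (eqP x1) group1.
have : #[x] %| (p ^ n.+1)%N by rewrite -En dvdn_exponent.
case/(dvdn_pfactor _ _ pp) => m lem ox.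
have oxE : #[x] = E.
  rewrite ox En; apply: (congr1 (expn p)); apply/eqP; rewrite eqn_leq lem /=.
  rewrite ltnNge; apply/negP => lm.
  by move: x1; rewrite -order_dvdn ox dvdn_exp2l.
by rewrite -(pn x oxE); apply: (keyK pp pG cGG chK ntK Gx).
Qed.
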